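(* The Galois structure $\Gamma=(\mathsf{PreOrdGrp},\mathsf{Mono(Ab)},F,U,\mathscr{E},\mathscr{Z})$ is admissible; that is, for every preordered group $B$, every object $X$ of $\mathsf{Mono(Ab)}$ and every regular epimorphism $\phi\colon X\to F(B)$ in $\mathsf{Mono(Ab)}$, the functor $F$ sends the pullback in $\mathsf{PreOrdGrp}$ of $U(\phi)$ along the unit $\eta_B\colon B\to UF(B)$ to a pullback in $\mathsf{Mono(Ab)}$.
   Context: A preordered group is a pair $(G,P_G)$ with $G$ an additively written group and $P_G\subseteq G$ a submonoid closed under conjugation; morphisms are group homomorphisms $f$ with $f(P_G)\subseteq P_H$. This is $\mathsf{PreOrdGrp}$; limits are computed componentwise. $\mathsf{Mono(Ab)}$ is the full subcategory of $(G,P_G)$ with $G$ abelian and $P_G$ a subgroup, $U$ its inclusion, and $F$ its left adjoint: $F(G,P_G)=(G/[G,G],\{x-y: x,y\in\eta_G(P_G)\})$, $\eta_G$ the abelianization quotient, unit induced by $\eta_G$; the counit of $F\dashv U$ is an isomorphism. $\mathscr E$ (resp. $\mathscr Z$) is the class of regular epimorphisms in $\mathsf{PreOrdGrp}$ (resp. $\mathsf{Mono(Ab)}$), i.e. morphisms $(f,\bar f)$ with $f$ and its restriction $\bar f$ to positive cones both surjective. A Galois structure $(\mathscr C,\mathscr F,F,U,\mathscr E,\mathscr Z)$ is admissible when for every $B$ the counit of the induced adjunction between $\mathscr E$-extensions of $B$ and $\mathscr Z$-extensions of $F(B)$ (right adjoint: pullback of $U(\phi)$ along $\eta_B$) is an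 isomorphism; when the counit of $F\dashv U$ is an isomorphism this is equivalent to the pullback-preservation condition in the claim. *)

(* Defs.v *)
From Stdlib Require Import ClassicalEpsilon.

Set Implicit Arguments.

(** Data of a preordered group: an additively written group with a
    distinguished subset (the positive cone).  The axioms are stated
    separately in [isPreOrdGrp]. *)
Record pgrp := PGrp {
  car :> Type;
  add : car -> car -> car;
  zero : car;
  opp : car -> car;
  pos : car -> Prop }.

Arguments add {p} _ _.
Arguments zero {p}.
Arguments opp {p} _.
Arguments pos {p} _.

Definition sub {G : pgrp} (x y : G) : G := add x (opp y).

Definition isPreOrdGrp (G : pgrp) : Prop :=
  (forall x y z : G, add x (add y z) = add (add x y) z) /\
  (forall x : G, add zero x = x) /\
  (forall x : G, add x zero = x) /\
  (forall x : G, add (opp x) x = zero) /\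
  (forall x : G, add x (opp x) = zero) /\
  pos (@zero G) /\
  (forall x y : G, pos x -> pos y -> pos (add x y)) /\
  (forall x p : G, pos p -> pos (add (add x p) (opp x))).

Definition isMonoAb (G : pgrp) : Prop :=
  isPreOrdGrp G /\
  (forall x y : G, add x y = add y x) /\
  (forall x : G, pos x -> pos (opp x)).

Definition hom {G H : pgrp} (f : G -> H) : Prop :=
  (forall x y : G, f (add x y) = add (f x) (f y)) /\
  (forall x : G, pos x -> pos (f x)).

(** Regular epimorphisms (classes E and Z): surjective, and surjective on
    positive cones. *)
Definition regepi {G H : pgrp} (f : G -> H) : Prop :=
  hom f /\
  (forall y : H, exists x : G, f x = y) /\
  (forall y : H, pos y -> exists x : G, pos x /\ f x = y).

Definition commsub {G : pgrp} (x : G) : Prop :=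
  forall S : G -> Prop,
    S zero ->
    (forall a b, S a -> S b -> S (sub a b)) ->
    (forall a b : G, S (sub (sub (add a b) a) b)) ->
    S x.

Definition abeq {G : pgrp} (x y : G) : Prop := commsub (sub x y).

(** The abelianization G/[G,G] as a type of equivalence classes. *)
Definition qcar (G : pgrp) : Type :=
  { S : G -> Prop | exists x : G, S = abeq x }.

Definition cls {G : pgrp} (x : G) : qcar G :=
  exist _ (abeq x) (ex_intro _ x eq_refl).

Definition repr {G : pgrp} (S : qcar G) : G :=
  proj1_sig (constructive_indefinite_description _ (proj2_sig S)).

Definition qadd {G : pgrp} (S T : qcar G) : qcar G := cls (add (repr S) (repr T)).
Definition qzero (G : pgrp) : qcar G := cls (@zero G).
Definition qopp {G : pgrp} (S : qcar G) : qcar G := cls (opp (repr S)).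

Definition qpos {G : pgrp} (S : qcar G) : Prop :=
  exists x y : G, pos x /\ pos y /\ S = qadd (cls x) (qopp (cls y)).

Definition Fobj (G : pgrp) : pgrp :=
  {| car := qcar G; add := qadd (G:=G); zero := qzero G; opp := qopp (G:=G);
     pos := qpos (G:=G) |}.

Definition eta (G : pgrp) : G -> Fobj G := cls (G:=G).

Definition Fmor {G H : pgrp} (f : G -> H) : Fobj G -> Fobj H :=
  fun S => cls (f (repr S)).

(** A commutative square
       P --p2--> X
       |p1       |g
       B --f---> C
    is a pullback in the full subcategory of pgrp cut out by [Obj]
    (universal property, uniqueness among morphisms). *)
Definition is_pullback_in (Obj : pgrp -> Prop) {P B X C : pgrp}
    (p1 : P -> B) (p2 : P -> X) (f : B -> C) (g : X -> C) : Prop :=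
  (forall p, f (p1 p) = g (p2 p)) /\
  forall (Z : pgrp) (z1 : Z -> B) (z2 : Z -> X),
    Obj Z -> hom z1 -> hom z2 -> (forall z, f (z1 z) = g (z2 z)) ->
    exists u : Z -> P, hom u /\ (forall z, p1 (u z) = z1 z) /\ (forall z, p2 (u z) = z2 z) /\
      forall v : Z -> P, hom v -> (forall z, p1 (v z) = z1 z) -> (forall z, p2 (v z) = z2 z) ->
        forall z, v z = u z.

(* Main.v *)
Require Import Defs.
From Stdlib Require Import ClassicalEpsilon ProofIrrelevance FunctionalExtensionality PropExtensionality.

Definition grp (G : pgrp) : Prop :=
  (forall x y z : G, add x (add y z) = add (add x y) z) /\
  (forall x : G, add zero x = x) /\
  (forall x : G, add x zero = x) /\
  (forall x : G, add (opp x) x = zero) /\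
  (forall x : G, add x (opp x) = zero).

Lemma pre_grp G : isPreOrdGrp G -> grp G.
Proof. intros (a&b&c&d&e&_). repeat split; auto. Qed.

Lemma gA {G} (HG : grp G) (x y z : G) : add x (add y z) = add (add x y) z.
Proof. apply HG. Qed.
Lemma g0l {G} (HG : grp G) (x : G) : add zero x = x.
Proof. apply HG. Qed.
Lemma g0r {G} (HG : grp G) (x : G) : add x zero = x.
Proof. apply HG. Qed.
Lemma gVl {G} (HG : grp G) (x : G) : add (opp x) x = zero.
Proof. apply HG. Qed.
Lemma gVr {G} (HG : grp G) (x : G) : add x (opp x) = zero.
Proof. apply HG. Qed.

Lemma ginv_uniq {G} (HG : grp G) (a b : G) : add a b = zero -> a = opp b.
Proof.
  intro H. rewrite <- (g0r HG a), <- (gVr HG b), (gA HG), H, (g0l HG). reflexivity.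
Qed.
Lemma gopp_opp {G} (HG : grp G) (a : G) : opp (opp a) = a.
Proof. symmetry. apply ginv_uniq; auto. apply gVr; auto. Qed.
Lemma gopp0 {G} (HG : grp G) : opp (@zero G) = zero.
Proof. symmetry. apply ginv_uniq; auto. apply g0l; auto. Qed.
Lemma gopp_add {G} (HG : grp G) (a b : G) : opp (add a b) = add (opp b) (opp a).
Proof.
  symmetry. apply ginv_uniq; auto.
  rewrite <- (gA HG), (gA HG (opp a)), (gVl HG), (g0l HG), (gVl HG). reflexivity.
Qed.
Lemma gcancel_l {G} (HG : grp G) (a b c : G) : add a b = add a c -> b = c.
Proof.
  intro H. rewrite <- (g0l HG b), <- (g0l HG c), <- (gVl HG a), <- !(gA HG), H. reflexivity.
Qed.

Lemma hom0 {G H : pgrp} (HH : grp H) (f : G -> H) (HG : grp G)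
  (hf : forall x y, f (add x y) = add (f x) (f y)) : f zero = zero.
Proof.
  apply (gcancel_l HH (f zero)). rewrite <- hf, (g0r HH), (g0r HG). reflexivity.
Qed.
Lemma homV {G H : pgrp} (HH : grp H) (f : G -> H) (HG : grp G)
  (hf : forall x y, f (add x y) = add (f x) (f y)) x : f (opp x) = opp (f x).
Proof.
  apply ginv_uniq; auto. rewrite <- hf, (gVl HG). apply (hom0 HH f HG hf).
Qed.
Lemma gA' {G} (HG : grp G) (x y z : G) : add (add x y) z = add x (add y z).
Proof. symmetry; apply gA; auto. Qed.
Lemma gK1 {G} (HG : grp G) (x y : G) : add x (add (opp x) y) = y.
Proof. rewrite (gA HG), (gVr HG), (g0l HG); auto. Qed.
Lemma gK2 {G} (HG : grp G) (x y : G) : add (opp x) (add x y) = y.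
Proof. rewrite (gA HG), (gVl HG), (g0l HG); auto. Qed.

Ltac gnorm HG := unfold sub; repeat progress rewrite ?(gA' HG), ?(gK1 HG), ?(gK2 HG),
  ?(gVl HG), ?(gVr HG), ?(g0l HG), ?(g0r HG), ?(gopp_add HG), ?(gopp_opp HG), ?(gopp0 HG).

Section K.
Lemma K0 {G : pgrp} : commsub (@zero G).
Proof. intros S h0 hs hc; exact h0. Qed.
Lemma Ksub {G : pgrp} (a b : G) : commsub a -> commsub b -> commsub (sub a b).
Proof. intros ha hb S h0 hs hc. apply hs; [apply ha|apply hb]; auto. Qed.
Lemma Kcomm {G : pgrp} (a b : G) : commsub (sub (sub (add a b) a) b).
Proof. intros S h0 hs hc. apply hc. Qed.
End K.

Lemma Kopp {G} (HG : grp G) (a : G) : commsub a -> commsub (opp a).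
Proof. intro h. replace (opp a) with (sub zero a). apply Ksub; auto. apply K0.
  unfold sub. apply g0l; auto. Qed.
Lemma Kadd {G} (HG : grp G) (a b : G) : commsub a -> commsub b -> commsub (add a b).
Proof. intros ha hb. replace (add a b) with (sub a (opp b)). apply Ksub; auto. apply Kopp; auto.
  unfold sub. rewrite (gopp_opp HG). auto. Qed.
Lemma Knorm {G} (HG : grp G) (g c : G) : commsub c -> commsub (add (add g c) (opp g)).
Proof. intro h. replace (add (add g c) (opp g)) with (add (sub (sub (add g c) g) c) c).
  apply Kadd; auto. apply Kcomm. gnorm HG. reflexivity. Qed.

Lemma sig_eq {A} {P : A -> Prop} (a b : sig P) : proj1_sig a = proj1_sig b -> a = b.
Proof. destruct a, b; simpl; intros ->. f_equal. apply proof_irrelevance. Qed.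

Lemma cls_eq {G} (HG : grp G) (x y : G) : cls x = cls y <-> commsub (sub x y).
Proof. split.
  - intro h. apply (f_equal (@proj1_sig _ _)) in h. simpl in h.
    assert (e := equal_f h y). unfold abeq in e. rewrite e. unfold sub. rewrite (gVr HG). apply K0.
  - intro h. apply sig_eq. simpl. apply functional_extensionality. intro z.
    apply propositional_extensionality. unfold abeq. split; intro h2.
    + replace (sub y z) with (add (opp (sub x y)) (sub x z)). apply Kadd; auto. apply Kopp; auto.
      gnorm HG. reflexivity.
    + replace (sub x z) with (add (sub x y) (sub y z)). apply Kadd; auto. gnorm HG. reflexivity.
Qed.

Lemma cls_repr {G} (S : qcar G) : cls (repr S) = S.
Proof. apply sig_eq. simpl. unfold repr.
  destruct (constructive_indefinite_description _ (proj2_sig S)) as [r hr]. simpl. auto. Qed.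

Lemma cls_ind {G} (Q : qcar G -> Prop) : (forall x, Q (cls x)) -> forall S, Q S.
Proof. intros h S. rewrite <- (cls_repr S). apply h. Qed.

Lemma qadd_cls {G} (HG : grp G) (a b : G) : qadd (cls a) (cls b) = cls (add a b).
Proof. unfold qadd. apply cls_eq; auto.
  assert (ha := proj1 (cls_eq HG _ _) (cls_repr (cls a))).
  assert (hb := proj1 (cls_eq HG _ _) (cls_repr (cls b))).
  set (r := repr (cls a)) in *. set (s := repr (cls b)) in *.
  replace (sub (add r s) (add a b)) with (add (add (add r (sub s b)) (opp r)) (sub r a)).
  apply Kadd; auto. apply Knorm; auto. gnorm HG. reflexivity. Qed.

Lemma qopp_cls {G} (HG : grp G) (a : G) : qopp (cls a) = cls (opp a).
Proof. unfold qopp. apply cls_eq; auto.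
  assert (ha := proj1 (cls_eq HG _ _) (cls_repr (cls a))).
  set (r := repr (cls a)) in *.
  replace (sub (opp r) (opp a)) with (add (add (opp r) (opp (sub r a))) (opp (opp r))).
  apply Knorm; auto. apply Kopp; auto. gnorm HG. reflexivity. Qed.

Lemma qcomm {G} (HG : grp G) (a b : G) : cls (add a b) = cls (add b a).
Proof. apply cls_eq; auto.
  replace (sub (add a b) (add b a)) with (sub (sub (add a b) a) b). apply Kcomm.
  gnorm HG. reflexivity. Qed.

Lemma Fgrp {G} (HG : grp G) : grp (Fobj G).
Proof. repeat split; simpl.
  - intros x y z; revert x; apply cls_ind; intro x; revert y; apply cls_ind; intro y;
    revert z; apply cls_ind; intro z. rewrite !(qadd_cls HG), (gA HG). auto.
  - apply cls_ind; intro x. unfold qzero. rewrite (qadd_cls HG), (g0l HG). auto.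
  - apply cls_ind; intro x. unfold qzero. rewrite (qadd_cls HG), (g0r HG). auto.
  - apply cls_ind; intro x. unfold qzero. rewrite (qopp_cls HG), (qadd_cls HG), (gVl HG). auto.
  - apply cls_ind; intro x. unfold qzero. rewrite (qopp_cls HG), (qadd_cls HG), (gVr HG). auto.
Qed.

Lemma Fab {G} (HG : grp G) (x y : Fobj G) : add x y = add y x.
Proof. revert x; apply cls_ind; intro x; revert y; apply cls_ind; intro y. simpl.
  rewrite !(qadd_cls HG). apply qcomm; auto. Qed.

Lemma hom_K {G H : pgrp} (HG : grp G) (HH : grp H) (f : G -> H)
  (hf : forall x y, f (add x y) = add (f x) (f y)) x : commsub x -> commsub (f x).
Proof. intro h. apply (h (fun x => commsub (f x))).
  - rewrite (hom0 HH f HG hf). apply K0.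
  - intros a b ha hb. unfold sub. rewrite hf, (homV HH f HG hf). apply Ksub; auto.
  - intros a b. unfold sub. rewrite !hf, !(homV HH f HG hf). apply Kcomm.
Qed.

Lemma Fmor_cls {G H : pgrp} (HG : grp G) (HH : grp H) (f : G -> H)
  (hf : forall x y, f (add x y) = add (f x) (f y)) x : Fmor f (cls x) = cls (f x).
Proof. unfold Fmor. apply cls_eq; auto.
  assert (ha := proj1 (cls_eq HG _ _) (cls_repr (cls x))).
  apply (hom_K HG HH f hf) in ha. unfold sub in *. rewrite hf, (homV HH f HG hf) in ha. exact ha.
Qed.

Lemma K_ab {G} (HG : grp G) (ab : forall x y : G, add x y = add y x) (x : G) : commsub x -> x = zero.
Proof. intro h. apply (h (fun x => x = zero)); auto.
  - intros a b -> ->. unfold sub. rewrite (gopp0 HG), (g0l HG). auto.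
  - intros a b. rewrite (ab a b). gnorm HG. reflexivity.
Qed.

Lemma cls_inj {G} (HG : grp G) (ab : forall x y : G, add x y = add y x) (x y : G) :
  cls x = cls y -> x = y.
Proof. intro h. apply (cls_eq HG) in h. apply (K_ab HG ab) in h.
  rewrite <- (g0l HG y), <- h. gnorm HG. reflexivity. Qed.

Lemma pos_zero {G : pgrp} (H : isPreOrdGrp G) : pos (@zero G).
Proof. apply H. Qed.
Lemma pos_add {G : pgrp} (H : isPreOrdGrp G) (x y : G) : pos x -> pos y -> pos (add x y).
Proof. apply H. Qed.
Lemma pos_conj {G : pgrp} (H : isPreOrdGrp G) (x p : G) : pos p -> pos (add (add x p) (opp x)).
Proof. apply H. Qed.

Section Main.
Variables (B X : pgrp) (phi : X -> Fobj B).
Hypotheses (HB : isPreOrdGrp B) (HX : isMonoAb X) (Hphi : regepi phi).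
Variables (P : pgrp) (p1 : P -> B) (p2 : P -> X).
Hypotheses (HP : isPreOrdGrp P) (hp1 : hom p1) (hp2 : hom p2)
  (Hpb : is_pullback_in isPreOrdGrp p1 p2 (eta B) phi).

Let HXp : isPreOrdGrp X := proj1 HX.
Let gB := pre_grp B HB.
Let gX := pre_grp X HXp.
Let gP := pre_grp P HP.
Let gFB := Fgrp gB.
Let abX : forall x y : X, add x y = add y x := proj1 (proj2 HX).
Let oppX : forall x : X, pos x -> pos (opp x) := proj2 (proj2 HX).
Let aphi : forall x y, phi (add x y) = add (phi x) (phi y) := proj1 (proj1 Hphi).
Let ap1 : forall x y, p1 (add x y) = add (p1 x) (p1 y) := proj1 hp1.
Let ap2 : forall x y, p2 (add x y) = add (p2 x) (p2 y) := proj1 hp2.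
Let aeta : forall x y : B, eta B (add x y) = add (eta B x) (eta B y).
Proof. intros. unfold eta. simpl. rewrite (qadd_cls gB). auto. Qed.

Lemma qc_add (b b' : B) (x x' : X) : eta B b = phi x -> eta B b' = phi x' ->
  eta B (add b b') = phi (add x x').
Proof. intros h h'. rewrite aeta, aphi, h, h'. auto. Qed.
Lemma qc_zero : eta B zero = phi zero.
Proof. rewrite (hom0 gFB phi gX aphi). auto. Qed.
Lemma qc_opp (b : B) (x : X) : eta B b = phi x -> eta B (opp b) = phi (opp x).
Proof. intros h. rewrite (homV gFB phi gX aphi), <- h. unfold eta. simpl.
  rewrite (qopp_cls gB). auto. Qed.

Definition Qc := {bx : B * X | eta B (fst bx) = phi (snd bx)}.
Definition Qadd (a c : Qc) : Qc :=
  exist _ (add (fst (proj1_sig a)) (fst (proj1_sig c)), add (snd (proj1_sig a)) (snd (proj1_sig c)))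
    (qc_add _ _ _ _ (proj2_sig a) (proj2_sig c)).
Definition Qzero : Qc := exist _ (zero, zero) qc_zero.
Definition Qopp (a : Qc) : Qc :=
  exist _ (opp (fst (proj1_sig a)), opp (snd (proj1_sig a))) (qc_opp _ _ (proj2_sig a)).
Definition Qp : pgrp := {| car := Qc; add := Qadd; zero := Qzero; opp := Qopp;
  pos := fun a => pos (fst (proj1_sig a)) /\ pos (snd (proj1_sig a)) |}.

Lemma Qpre : isPreOrdGrp Qp.
Proof. repeat split; simpl.
  - intros [[a1 a2] ?] [[b1 b2] ?] [[c1 c2] ?]. apply sig_eq; simpl. f_equal; apply gA; auto.
  - intros [[a1 a2] ?]. apply sig_eq; simpl. f_equal; apply g0l; auto.
  - intros [[a1 a2] ?]. apply sig_eq; simpl. f_equal; apply g0r; auto.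
  - intros [[a1 a2] ?]. apply sig_eq; simpl. f_equal; apply gVl; auto.
  - intros [[a1 a2] ?]. apply sig_eq; simpl. f_equal; apply gVr; auto.
  - apply pos_zero; auto.
  - apply pos_zero; auto.
  - apply pos_add; auto; firstorder.
  - apply pos_add; auto; firstorder.
  - apply pos_conj; auto; firstorder.
  - apply pos_conj; auto; firstorder.
Qed.

Definition q1 (a : Qp) : B := fst (proj1_sig a).
Definition q2 (a : Qp) : X := snd (proj1_sig a).
Lemma hq1 : hom q1.
Proof. split. intros [[]] [[]]; reflexivity. intros [[]] []; auto. Qed.
Lemma hq2 : hom q2.
Proof. split. intros [[]] [[]]; reflexivity. intros [[]] []; auto. Qed.

Lemma P2 (b : B) (x : X) : eta B b = phi x ->
  exists p, p1 p = b /\ p2 p = x /\ (pos b -> pos x -> pos p).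
Proof. intro h.
  destruct (proj2 Hpb Qp q1 q2 Qpre hq1 hq2 (fun z => proj2_sig z)) as [uQ [huQ [hu1 [hu2 _]]]].
  exists (uQ (exist _ (b, x) h)). rewrite hu1, hu2. split; auto. split; auto.
  intros. apply (proj2 huQ). simpl. auto.
Qed.

Lemma Pinj (a b : P) : p1 a = p1 b -> p2 a = p2 b -> a = b.
Proof. intros e1 e2.
  destruct (proj2 Hpb Qp q1 q2 Qpre hq1 hq2 (fun z => proj2_sig z)) as [uQ [huQ [hu1 [hu2 _]]]].
  set (w := fun p => exist (fun bx : B * X => eta B (fst bx) = phi (snd bx)) (p1 p, p2 p) (proj1 Hpb p) : Qp).
  assert (hw : hom w). { split.
    - intros x y. apply sig_eq. simpl. rewrite ap1, ap2. auto.
    - intros x hx. simpl. split; [apply hp1|apply hp2]; auto. }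
  destruct (proj2 Hpb P p1 p2 HP hp1 hp2 (proj1 Hpb)) as [u0 [hu0 [h01 [h02 huniq]]]].
  assert (E1 : forall p, p = u0 p).
  { apply huniq; auto. split; auto. }
  assert (E2 : forall p, uQ (w p) = u0 p).
  { apply huniq. split. intros x y. rewrite (proj1 hw), (proj1 huQ). auto.
    intros x hx. apply huQ, hw, hx. intros; apply hu1. intros; apply hu2. }
  assert (ew : w a = w b). { apply sig_eq. simpl. rewrite e1, e2; auto. }
  rewrite (E1 a), (E1 b), <- !E2, ew. auto.
Qed.

Lemma lift_K (b : B) : commsub b -> exists q, p1 q = b /\ p2 q = zero /\ commsub q.
Proof. intro h. apply (h (fun b => exists q, p1 q = b /\ p2 q = zero /\ commsub q)).
  - exists zero. rewrite (hom0 gB p1 gP ap1), (hom0 gX p2 gP ap2). split; auto. split; auto. apply K0.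
  - intros a c [qa [ha1 [ha2 ha3]]] [qc [hc1 [hc2 hc3]]]. exists (sub qa qc).
    unfold sub. rewrite ap1, ap2, (homV gB p1 gP ap1), (homV gX p2 gP ap2), ha1, ha2, hc1, hc2.
    split; auto. split. gnorm gX. auto. apply Ksub; auto.
  - intros a c.
    destruct (proj1 (proj2 Hphi) (cls a)) as [xa hxa].
    destruct (proj1 (proj2 Hphi) (cls c)) as [xc hxc].
    destruct (P2 a xa (eq_sym hxa)) as [qa [ha1 [ha2 _]]].
    destruct (P2 c xc (eq_sym hxc)) as [qc [hc1 [hc2 _]]].
    exists (sub (sub (add qa qc) qa) qc).
    unfold sub. rewrite !ap1, !ap2, !(homV gB p1 gP ap1), !(homV gX p2 gP ap2), ha1, ha2, hc1, hc2.
    split; auto. split. rewrite (abX xa xc). gnorm gX. auto. apply Kcomm.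
Qed.

Lemma Key (p p' : P) : p2 p = p2 p' -> cls (p1 p) = cls (p1 p') -> cls p = cls p'.
Proof. intros e h. apply (cls_eq gB) in h. apply (cls_eq gP).
  destruct (lift_K _ h) as [q [h1 [h2 h3]]].
  replace (sub p p') with q; auto. apply Pinj.
  - rewrite h1. unfold sub. rewrite ap1, (homV gB p1 gP ap1). auto.
  - rewrite h2. unfold sub. rewrite ap2, (homV gX p2 gP ap2), e, (gVr gX). auto.
Qed.


Lemma pos_sub_X (x y : X) : pos x -> pos y -> pos (sub x y).
Proof. intros. apply pos_add; auto. Qed.

Lemma main : is_pullback_in isMonoAb (Fmor p1) (Fmor p2) (Fmor (eta B)) (Fmor phi).
Proof.
  assert (Fp1 : forall p, Fmor p1 (cls p) = cls (p1 p)) by (intro; apply (Fmor_cls gP gB); auto).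
  assert (Fp2 : forall p, Fmor p2 (cls p) = cls (p2 p)) by (intro; apply (Fmor_cls gP gX); auto).
  assert (Feta : forall b, Fmor (eta B) (cls b) = cls (eta B b)) by (intro; apply (Fmor_cls gB gFB); auto).
  assert (Fphi : forall x, Fmor phi (cls x) = cls (phi x)) by (intro; apply (Fmor_cls gX gFB); auto).
  split.
  { apply cls_ind; intro p. rewrite Fp1, Fp2, Feta, Fphi, (proj1 Hpb). auto. }
  intros Z z1 z2 HZ hz1 hz2 hc.
  assert (hQ : forall z, eta B (repr (z1 z)) = phi (repr (z2 z))).
  { intro z. specialize (hc z). rewrite <- (cls_repr (z1 z)), <- (cls_repr (z2 z)), Feta, Fphi in hc.
    apply (cls_inj gFB (Fab gB)) in hc. exact hc. }
  assert (hpz : forall z, exists p, p1 p = repr (z1 z) /\ p2 p = repr (z2 z)).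
  { intro z. destruct (P2 _ _ (hQ z)) as [p [? [? _]]]. eauto. }
  set (pz := fun z => proj1_sig (constructive_indefinite_description _ (hpz z))).
  assert (hpz1 : forall z, p1 (pz z) = repr (z1 z)).
  { intro z. unfold pz. destruct (constructive_indefinite_description _ (hpz z)) as [? []]. auto. }
  assert (hpz2 : forall z, p2 (pz z) = repr (z2 z)).
  { intro z. unfold pz. destruct (constructive_indefinite_description _ (hpz z)) as [? []]. auto. }
  clearbody pz.
  assert (cz1 : forall z, cls (p1 (pz z)) = z1 z) by (intro; rewrite hpz1; apply cls_repr).
  assert (cz2 : forall z, cls (p2 (pz z)) = z2 z) by (intro; rewrite hpz2; apply cls_repr).
  exists (fun z => cls (pz z)). split; [split|split; [|split]].
  - intros z z'. simpl. rewrite (qadd_cls gP). apply Key.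
    + apply (cls_inj gX abX). rewrite ap2, <- (qadd_cls gX), !cz2. apply (proj1 hz2).
    + rewrite ap1, <- (qadd_cls gB), !cz1. apply (proj1 hz1).
  - intros z hz. simpl.
    destruct (proj2 hz1 z hz) as [b1 [b2 [hb1 [hb2 e1]]]].
    destruct (proj2 hz2 z hz) as [x1 [x2 [hx1 [hx2 e2]]]].
    simpl in e1, e2. rewrite (qopp_cls gB), (qadd_cls gB) in e1.
    rewrite (qopp_cls gX), (qadd_cls gX) in e2.
    assert (ex : p2 (pz z) = sub x1 x2).
    { apply (cls_inj gX abX). rewrite cz2. auto. }
    assert (hposb1 : qpos (cls b1)).
    { exists b1, zero. split; auto. split. apply pos_zero; auto.
      rewrite (qopp_cls gB), (qadd_cls gB), (gopp0 gB), (g0r gB). auto. }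
    destruct (proj2 (proj2 Hphi) (cls b1) hposb1) as [y1 [hy1 ey1]].
    set (y2 := sub y1 (sub x1 x2)).
    assert (hy2 : pos y2). { unfold y2. apply pos_sub_X; auto. apply pos_sub_X; auto. }
    assert (ey2 : phi y2 = cls b2).
    { unfold y2, sub. rewrite aphi, (homV gFB phi gX aphi), ey1.
      assert (phi (add x1 (opp x2)) = cls (sub b1 b2)).
      { change (phi (sub x1 x2) = cls (sub b1 b2)). rewrite <- ex, <- (proj1 Hpb), hpz1. unfold eta. rewrite cls_repr. auto. }
      rewrite H. simpl. unfold sub. rewrite <- (qadd_cls gB), <- (qopp_cls gB).
      change (@add (Fobj B) (cls b1) (@opp (Fobj B) (@add (Fobj B) (cls b1) (@opp (Fobj B) (cls b2)))) = cls b2).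
      gnorm gFB. rewrite (Fab gB (cls b2)). gnorm gFB. auto. }
    destruct (P2 b1 y1 (eq_sym ey1)) as [q1' [hq11 [hq12 hq13]]].
    destruct (P2 b2 y2 (eq_sym ey2)) as [q2' [hq21 [hq22 hq23]]].
    exists q1', q2'. split; auto. split; auto.
    rewrite (qopp_cls gP), (qadd_cls gP). apply Key.
    + rewrite ap2, (homV gX p2 gP ap2), hq12, hq22, ex. unfold y2, sub.
      gnorm gX. rewrite (abX y1). gnorm gX. auto.
    + rewrite cz1, e1, ap1, (homV gB p1 gP ap1), hq11, hq21. auto.
  - intro z. rewrite Fp1. auto.
  - intro z. rewrite Fp2. auto.
  - intros v hv hv1 hv2 z.
    rewrite <- (cls_repr (v z)). apply Key.
    + apply (cls_inj gX abX). rewrite cz2, <- Fp2, cls_repr. auto.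
    + rewrite cz1, <- Fp1, cls_repr. auto.
Qed.

End Main.

Theorem corollary5p5 :
  forall (B X : pgrp) (phi : X -> Fobj B),
    isPreOrdGrp B -> isMonoAb X -> regepi phi ->
    forall (P : pgrp) (p1 : P -> B) (p2 : P -> X),
      isPreOrdGrp P -> hom p1 -> hom p2 ->
      is_pullback_in isPreOrdGrp p1 p2 (eta B) phi ->
      is_pullback_in isMonoAb (Fmor p1) (Fmor p2) (Fmor (eta B)) (Fmor phi).
Proof. intros. apply main; auto. Qed.
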